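(* Let $T:X\rightrightarrows X^*$ be a multivalued operator and let $x\in X$. The following are equivalent: (1) $V_T(x)=\emptyset$; (2) $x\in Z_{T^\rho}$; (3) $T^\rho(x)=N_{W_T(x)}(x)$; (4) $x\in\mathrm{dom}(T^\rho)$ and $T^\rho(x)$ is weak$^*$-closed.
   Context: $X$ is a real Banach space with dual $X^*$ and pairing $\langle x,x^*\rangle=x^*(x)$. A multivalued operator $T:X\rightrightarrows X^*$ is identified with its graph $T\subset X\times X^*$; $T(x)=\{x^*:(x,x^* )\in T\}$, $\mathrm{dom}(T)=\{x:T(x)\neq\emptyset\}$, and $Z_T=\{x: 0\in T(x)\}$. $V_T(x)=\{y\in X:\exists\, y^*\in T(y),\ \langle x-y,y^*\rangle>0\}$ and $W_T(x)=\{y\in X:\exists\, y^*\in T(y),\ \langle x-y,y^*\rangle=0\}$. For $C\subset X$, $N_C(x)=\{x^*\in X^*: \langle y-x,x^*\rangle\le 0\ \forall y\in C\}$ (equal to $X^*$ if $C=\emptyset$). For $(x,x^* ),(y,y^* )\in X\times X^*$, write $(x,x^* )\sim_p(y,y^* )$ if either $\min\{\langle x-y,y^*\rangle,\langle y-x,x^*\rangle\}<0$ or $\langle x-y,y^*\rangle=\langle y-x,x^*\rangle=0$. The pseudomonotone polar of $T$ is $T^\rho=\{(x,x^* )\in X\times X^*: (x,x^* )\sim_p(y,y^* )\ \forall (y,y^* )\in T\}$. *)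

(* Defs.v *)
From Stdlib Require Import Reals List.
Open Scope R_scope.

Record BanachSpace := {
  bs_car :> Type;
  bs_zero : bs_car;
  bs_add : bs_car -> bs_car -> bs_car;
  bs_opp : bs_car -> bs_car;
  bs_scal : R -> bs_car -> bs_car;
  bs_norm : bs_car -> R;
  bs_addA : forall x y z, bs_add x (bs_add y z) = bs_add (bs_add x y) z;
  bs_addC : forall x y, bs_add x y = bs_add y x;
  bs_add0 : forall x, bs_add bs_zero x = x;
  bs_addN : forall x, bs_add x (bs_opp x) = bs_zero;
  bs_scalA : forall a b x, bs_scal a (bs_scal b x) = bs_scal (a * b) x;
  bs_scal1 : forall x, bs_scal 1 x = x;
  bs_scalDr : forall a x y, bs_scal a (bs_add x y) = bs_add (bs_scal a x) (bs_scal a y);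
  bs_scalDl : forall a b x, bs_scal (a + b) x = bs_add (bs_scal a x) (bs_scal b x);
  bs_norm_eq0 : forall x, bs_norm x = 0 -> x = bs_zero;
  bs_normZ : forall a x, bs_norm (bs_scal a x) = Rabs a * bs_norm x;
  bs_normD : forall x y, bs_norm (bs_add x y) <= bs_norm x + bs_norm y;
  bs_complete : forall u : nat -> bs_car,
    (forall eps, eps > 0 -> exists N, forall n m, (n >= N)%nat -> (m >= N)%nat ->
        bs_norm (bs_add (u n) (bs_opp (u m))) < eps) ->
    exists l, forall eps, eps > 0 -> exists N, forall n, (n >= N)%nat ->
        bs_norm (bs_add (u n) (bs_opp l)) < eps
}.

Definition bs_sub (X : BanachSpace) (x y : X) : X := bs_add X x (bs_opp X y).

Definition is_linear_functional (X : BanachSpace) (f : X -> R) : Prop :=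
  (forall x y, f (bs_add X x y) = f x + f y) /\
  (forall a x, f (bs_scal X a x) = a * f x).

Definition is_bounded_functional (X : BanachSpace) (f : X -> R) : Prop :=
  exists M, forall x, Rabs (f x) <= M * bs_norm X x.

Definition dual (X : BanachSpace) : Type :=
  { f : X -> R | is_linear_functional X f /\ is_bounded_functional X f }.

Definition pair (X : BanachSpace) (x : X) (xs : dual X) : R := proj1_sig xs x.

Definition operator (X : BanachSpace) := X -> dual X -> Prop.

Definition dom (X : BanachSpace) (T : operator X) : X -> Prop :=
  fun x => exists xs, T x xs.

Definition zero_dual (X : BanachSpace) : dual X.
Proof.
  exists (fun _ => 0). split.
  - split; intros; ring.
  - exists 0. intros x. rewrite Rabs_R0. right; ring.
Defined.

Definition Zset (X : BanachSpace) (T : operator X) : X -> Prop :=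
  fun x => T x (zero_dual X).

Definition Vset (X : BanachSpace) (T : operator X) (x : X) : X -> Prop :=
  fun y => exists ys, T y ys /\ pair X (bs_sub X x y) ys > 0.

Definition Wset (X : BanachSpace) (T : operator X) (x : X) : X -> Prop :=
  fun y => exists ys, T y ys /\ pair X (bs_sub X x y) ys = 0.

(* Normal cone N_C(x); equals X^* when C is empty. *)
Definition normal_cone (X : BanachSpace) (C : X -> Prop) (x : X) : dual X -> Prop :=
  fun xs => forall y, C y -> pair X (bs_sub X y x) xs <= 0.

Definition sim_p (X : BanachSpace) (x : X) (xs : dual X) (y : X) (ys : dual X) : Prop :=
  Rmin (pair X (bs_sub X x y) ys) (pair X (bs_sub X y x) xs) < 0 \/
  (pair X (bs_sub X x y) ys = 0 /\ pair X (bs_sub X y x) xs = 0).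

Definition pm_polar (X : BanachSpace) (T : operator X) : operator X :=
  fun x xs => forall y ys, T y ys -> sim_p X x xs y ys.

(* weak^* topology sigma(X^*, X): basic neighbourhoods given by finitely many
   points of X and a radius. *)
Definition weak_star_open (X : BanachSpace) (U : dual X -> Prop) : Prop :=
  forall f, U f -> exists (l : list X) (eps : R), eps > 0 /\
    forall g, (forall z, In z l -> Rabs (pair X z g - pair X z f) < eps) -> U g.

Definition weak_star_closed (X : BanachSpace) (S : dual X -> Prop) : Prop :=
  weak_star_open X (fun f => ~ S f).

(* Main.v *)
Require Import Defs.
From Stdlib Require Import Reals List Lra.
Open Scope R_scope.

Definition scal_dual (X : BanachSpace) (t : R) (f : dual X) : dual X.
Proof.
  exists (fun z => t * proj1_sig f z).
  destruct (proj2_sig f) as [[Ha Hs] [M HM]]. split.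
  - split; intros; rewrite ?Ha, ?Hs; ring.
  - exists (Rabs t * M). intros z. rewrite Rabs_mult, Rmult_assoc.
    apply Rmult_le_compat_l; [apply Rabs_pos | apply HM].
Defined.

Lemma pair_scal X z t f : pair X z (scal_dual X t f) = t * pair X z f.
Proof. reflexivity. Qed.

Lemma pair_zero X z : pair X z (zero_dual X) = 0.
Proof. reflexivity. Qed.

Lemma sim_p_iff X x xs y ys :
  sim_p X x xs y ys <->
  (pair X (bs_sub X x y) ys < 0 \/ pair X (bs_sub X y x) xs < 0 \/
   (pair X (bs_sub X x y) ys = 0 /\ pair X (bs_sub X y x) xs = 0)).
Proof.
  unfold sim_p, Rmin.
  destruct (Rle_dec (pair X (bs_sub X x y) ys) (pair X (bs_sub X y x) xs));
  split; intros H; (destruct H as [H|[H|H]] || destruct H as [H|H]); lra.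
Qed.

Lemma small_t (X : BanachSpace) (h : X -> R) (l : list X) (eps : R) :
  eps > 0 -> exists t, t > 0 /\ forall z, In z l -> Rabs (t * h z) < eps.
Proof.
  intros He. induction l as [|a l IH].
  - exists 1. split; [lra|]. intros z [].
  - destruct IH as [t [Ht H]].
    set (t0 := eps / (Rabs (h a) + 1)).
    assert (Ht0 : t0 > 0).
    { unfold t0. apply Rdiv_lt_0_compat; [lra|]. pose proof (Rabs_pos (h a)); lra. }
    exists (Rmin t t0). split.
    { unfold Rmin; destruct Rle_dec; lra. }
    intros z [Hz|Hz]; [subst z|].
    + rewrite Rabs_mult. rewrite (Rabs_right (Rmin t t0)) by (unfold Rmin; destruct Rle_dec; lra).
      apply Rle_lt_trans with (t0 * Rabs (h a)).
      { apply Rmult_le_compat_r; [apply Rabs_pos| apply Rmin_r]. }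
      pose proof (Rabs_pos (h a)).
      assert (Ht0e : t0 * (Rabs (h a) + 1) = eps) by (unfold t0; field; lra).
      nra.
    + specialize (H z Hz). rewrite Rabs_mult in *.
      rewrite (Rabs_right (Rmin t t0)) by (unfold Rmin; destruct Rle_dec; lra).
      rewrite (Rabs_right t) in H by lra.
      apply Rle_lt_trans with (t * Rabs (h z)); [|exact H].
      apply Rmult_le_compat_r; [apply Rabs_pos| apply Rmin_l].
Qed.

Theorem mainTheorem5 (X : BanachSpace) (T : operator X) (x : X) :
  let c1 := (forall y, ~ Vset X T x y) in
  let c2 := Zset X (pm_polar X T) x in
  let c3 := (forall xs, pm_polar X T x xs <-> normal_cone X (Wset X T x) x xs) in
  let c4 := (dom X (pm_polar X T) x /\ weak_star_closed X (pm_polar X T x)) in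
  (c1 <-> c2) /\ (c1 <-> c3) /\ (c1 <-> c4).
Proof.
  cbv zeta.
  assert (E1 : (forall y, ~ Vset X T x y) <->
               (forall y ys, T y ys -> pair X (bs_sub X x y) ys <= 0)).
  { unfold Vset. split.
    - intros H y ys Hy. destruct (Rle_dec (pair X (bs_sub X x y) ys) 0); auto.
      exfalso. apply (H y). exists ys. split; auto; lra.
    - intros H y [ys [Hy Hp]]. specialize (H y ys Hy). lra. }
  assert (E12 : (forall y, ~ Vset X T x y) <-> Zset X (pm_polar X T) x).
  { rewrite E1. unfold Zset, pm_polar. split.
    - intros H y ys Hy. apply sim_p_iff. rewrite pair_zero.
      specialize (H y ys Hy). lra.
    - intros H y ys Hy. apply H, sim_p_iff in Hy. rewrite pair_zero in Hy. lra. }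
  assert (E13 : (forall y, ~ Vset X T x y) ->
     forall xs, pm_polar X T x xs <-> normal_cone X (Wset X T x) x xs).
  { rewrite E1. intros H xs. unfold pm_polar, normal_cone, Wset. split.
    - intros Hp y [ys [Hy Ha]]. apply Hp, sim_p_iff in Hy. lra.
    - intros Hn y ys Hy. apply sim_p_iff. specialize (H y ys Hy).
      destruct (Rlt_dec (pair X (bs_sub X x y) ys) 0) as [l|n]; [left; exact l|].
      assert (Ha : pair X (bs_sub X x y) ys = 0) by lra.
      assert (Hb := Hn y (ex_intro _ ys (conj Hy Ha))).
      destruct (Rlt_dec (pair X (bs_sub X y x) xs) 0); [right; left; auto|].
      right; right; split; lra. }
  split; [exact E12|]. split.
  - split; [exact E13|].
    intros H3. apply E12. unfold Zset. apply H3. intros y _. rewrite pair_zero. lra.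
  - split.
    + intros H1. split.
      { exists (zero_dual X). apply E12, H1. }
      intros f Hf. assert (Hf' : ~ normal_cone X (Wset X T x) x f).
      { intros Hc. apply Hf, (E13 H1), Hc. }
      unfold normal_cone in Hf'.
      destruct (Classical_Prop.classic (exists y, Wset X T x y /\ pair X (bs_sub X y x) f > 0))
        as [[y [Hw Hy]]|Hn].
      2:{ exfalso. apply Hf'. intros y Hw. destruct (Rle_dec (pair X (bs_sub X y x) f) 0); auto.
          exfalso. apply Hn. exists y. split; auto. lra. }
      exists (bs_sub X y x :: nil), (pair X (bs_sub X y x) f). split; [exact Hy|].
      intros g Hg Hpg. apply (E13 H1) in Hpg.
      specialize (Hg _ (or_introl eq_refl)). specialize (Hpg y Hw).
      apply Rabs_def2 in Hg. lra.
    + intros [[xs0 Hxs0] Hcl]. apply E1. intros y0 ys0 Hy0.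
      destruct (Rle_dec (pair X (bs_sub X x y0) ys0) 0) as [r|n]; [exact r|exfalso].
      assert (Hnz : ~ pm_polar X T x (zero_dual X)).
      { intros Hz. apply Hz, sim_p_iff in Hy0. rewrite pair_zero in Hy0. lra. }
      destruct (Hcl _ Hnz) as [l [eps [He Hl]]].
      destruct (small_t X (fun z => pair X z xs0) l eps He) as [t [Ht Htl]].
      apply (Hl (scal_dual X t xs0)).
      { intros z Hz. rewrite pair_scal, pair_zero, Rminus_0_r. apply Htl, Hz. }
      intros y ys Hy. apply sim_p_iff. rewrite pair_scal.
      apply Hxs0, sim_p_iff in Hy.
      destruct Hy as [H|[H|[H1 H2]]]; [left; auto|right; left; nra|right; right; split; [auto|]].
      rewrite H2; ring.
Qed.
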